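(* Let $r$ be an odd positive integer, and let $n=2p_1^{\alpha_1}p_2^{\alpha_2}\cdots p_s^{\alpha_s}$ with $s\ge 1$, where $p_1<p_2<\cdots<p_s$ are odd primes and $\alpha_1,\ldots,\alpha_s$ are positive integers. Then $n\in G_r$ if and only if $n+r$ is composite and $p_s-r\neq 2p_1^{\alpha_1}p_2^{\alpha_2}\cdots p_{s-1}^{\alpha_{s-1}}$.
   Context: For a positive integer $r$, the $r$-th Schemmel totient function $S_r:\mathbb{N}\to\mathbb{N}_0$ is the multiplicative arithmetic function (so $S_r(1)=1$ and $S_r(ab)=S_r(a)S_r(b)$ for coprime $a,b$) defined on prime powers by $S_r(p^{\alpha})=0$ if $p\le r$ and $S_r(p^\alpha)=p^{\alpha-1}(p-r)$ if $p>r$, for all primes $p$ and positive integers $\alpha$. $G_r$ denotes the set of positive integers not in the range of $S_r$. For $s=1$ the empty product $p_1^{\alpha_1}\cdots p_{s-1}^{\alpha_{s-1}}$ equals $1$. *)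

(* Defs.v *)
From mathcomp Require Import all_boot all_order all_algebra.
Set Implicit Arguments. Unset Strict Implicit. Unset Printing Implicit Defensive.

(* Schemmel totient S_r, multiplicative, on prime powers:
   S_r(p^a) = 0 if p <= r, p^(a-1) (p - r) if p > r.  S_r(1) = 1 (empty product).
   The value at 0 is irrelevant (domain is positive integers). *)
Definition schemmel (r n : nat) : nat :=
  \prod_(p <- primes n) (if p <= r then 0 else p ^ (logn p n).-1 * (p - r)).

Definition in_G (r m : nat) : Prop :=
  0 < m /\ ~ (exists n, 0 < n /\ schemmel r n = m).

Definition composite (m : nat) : bool := (1 < m) && ~~ prime m.

(* Main.v *)
Require Import Defs.
From mathcomp Require Import all_boot all_order all_algebra.
From mathcomp Require Import zify.

Lemma schemmel_pp r q k : prime q -> r < q -> schemmel r (q ^ k.+1) = q ^ k * (q - r).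
Proof.
move=> pq rq; rewrite /schemmel primesX // primes_prime // big_seq1 pfactorK //.
by rewrite leqNgt rq.
Qed.

Lemma prime_dvd_prodP q k (p alpha : nat -> nat) : prime q ->
  (forall i, i < k -> prime (p i)) -> q %| \prod_(i < k) p i ^ alpha i ->
  exists2 i, i < k & q = p i.
Proof.
move=> pq; elim: k => [|k IH] hp.
  by rewrite big_ord0 dvdn1 => /eqP q1; rewrite q1 in pq.
rewrite big_ord_recr /= Euclid_dvdM // => /orP [h|h].
  have [i ik ->] := IH (fun i ik => hp i (leq_trans ik (leqnSn k))) h.
  by exists i => //; apply: (leq_trans ik).
rewrite Euclid_dvdX // in h; case/andP: h => h _.
exists k => //; apply/eqP; rewrite -dvdn_prime2 //; exact: hp.
Qed.

Lemma odd_prod k (p alpha : nat -> nat) :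
  (forall i, i < k -> odd (p i)) -> odd (\prod_(i < k) p i ^ alpha i).
Proof.
move=> h; rewrite big_seq_cond; apply: (big_ind (fun v => odd v)) => //.
  by move=> x y ox oy; rewrite oddM ox.
by move=> i _; rewrite oddX h ?orbT.
Qed.

Lemma conv r N m : 0 < r -> odd r -> odd m -> 1 < m -> schemmel r N = 2 * m ->
  exists q c, [/\ prime q, r < q & 2 * m = q ^ c * (q - r)].
Proof.
move=> r0 oddr oddm m1; rewrite /schemmel.
set P := primes N.
set F := fun x => if x <= r then 0 else x ^ (logn x N).-1 * (x - r).
move=> hn.
have no4 : ~ (4 %| 2 * m).
  by rewrite -[4]/(2 * 2) dvdn_pmul2l // dvdn2 oddm.
have Fdvd : forall x, x \in P -> F x %| 2 * m.
  by move=> x xP; rewrite -hn (big_rem x xP) /= dvdn_mulr.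
have Fpos : forall x, x \in P -> 0 < F x.
  move=> x xP; have := Fdvd x xP; rewrite lt0n; apply: contraTN => /eqP ->.
  by rewrite dvd0n; lia.
have Pprop : forall x, x \in P -> [/\ prime x, r < x & F x = x ^ (logn x N).-1 * (x - r)].
  move=> x xP; have := Fpos x xP; have := xP; rewrite mem_primes => /andP [px _].
  rewrite /F; case: (leqP x r) => // rx _; split => //.
have Fev : forall x, x \in P -> odd x -> 2 %| F x.
  move=> x xP ox; have [_ rx Fx] := Pprop x xP; rewrite Fx.
  by apply: dvdn_mull; rewrite dvdn2 oddB ?ox ?oddr // ltnW.
have F2 : forall x, x \in P -> ~~ odd x -> x = 2 /\ exists e, F x = 2 ^ e.
  move=> x xP ox; have [px rx ->] := Pprop x xP.
  case: (even_prime px) => [x2|]; last by rewrite (negbTE ox).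
  subst x; split => //; have -> : r = 1 by lia.
  by exists (logn 2 N).-1; rewrite muln1.
case: (boolP (has odd P)) => [/hasP [q qP oq] | /hasP noodd].
  have [pq rq Fq] := Pprop q qP.
  exists q, (logn q N).-1; split => //; rewrite -Fq -hn (big_rem q qP) /=.
  have Fq2 := Fev q qP oq.
  have hrest : forall y, y \in rem q P -> F y = 1.
    move=> y yr.
    have := yr; rewrite mem_rem_uniq ?primes_uniq // => /andP [yq yP].
    have dy : F q * F y %| 2 * m.
      rewrite -hn (big_rem q qP) /= dvdn_pmul2l ?Fpos //.
      by rewrite (big_rem y yr) /= dvdn_mulr.
    have ndy : ~~ (2 %| F y).
      apply/negP => d2; apply: no4; apply: dvdn_trans dy.
      by rewrite -[4]/(2 * 2) dvdn_mul.
    case: (boolP (odd y)) => oy; first by rewrite Fev in ndy.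
    have [_ [e He]] := F2 y yP oy; move: ndy; rewrite He.
    by case: e {He} => // e; rewrite expnS dvdn_mulr.
  by rewrite big1_seq ?muln1 // => i /andP [_ /hrest].
have : exists t, \prod_(x <- P) F x = 2 ^ t.
  rewrite big_seq_cond; apply: (big_ind (fun v => exists t, v = 2 ^ t)).
  - by exists 0.
  - by move=> x y [a ->] [b ->]; exists (a + b); rewrite expnD.
  move=> x /andP [xP _]; have ox : ~~ odd x by apply/negP => ox; apply: noodd; exists x.
  by have [_ [e He]] := F2 x xP ox; exists e.
rewrite hn => -[[|t] ht]; first by lia.
rewrite expnS in ht; have mt : m = 2 ^ t by lia.
by move: oddm; rewrite mt oddX orbF => /eqP t0; move: mt; rewrite t0; lia.
Qed.

Lemma logn0 q x : ~~ (q %| x) -> logn q x = 0.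
Proof. by move=> h; apply/eqP; rewrite -leqn0 leqNgt logn_gt0 mem_primes (negbTE h) !andbF. Qed.

Lemma pow2_odd m t : odd m -> 1 < m -> 2 * m = 2 ^ t -> False.
Proof.
move=> om m1; case: t => [|t]; first by lia.
rewrite expnS => ht; have mt : m = 2 ^ t by lia.
by move: om; rewrite mt oddX orbF => /eqP t0; move: mt; rewrite t0; lia.
Qed.

Theorem theorem3p1 (r s : nat) (p alpha : nat -> nat) :
  0 < r -> odd r -> 1 <= s ->
  (forall i, i < s -> prime (p i) /\ odd (p i) /\ 0 < alpha i) ->
  (forall i j, i < j -> j < s -> p i < p j) ->
  in_G r (2 * \prod_(i < s) p i ^ alpha i) <->
  (composite (2 * \prod_(i < s) p i ^ alpha i + r) /\
   ((p s.-1)%:Z - r%:Z <> (2 * \prod_(i < s.-1) p i ^ alpha i)%:Z)%R).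
Proof.
move=> r0 oddr; case: s => [//|s'] _ hp hlt.
rewrite big_ord_recr /=.
set m' := \prod_(i < s') p i ^ alpha i.
have [pq0 [oq0 a0]] := hp s' (leqnn _).
set q0 := p s' in pq0 oq0 *; set a := alpha s' in a0 *.
have hpp : forall i, i < s' -> prime (p i).
  by move=> i ii; have [h _] := hp i (leq_trans ii (leqnSn _)).
have om' : odd m'.
  by apply: odd_prod => i ii; have [_ [h _]] := hp i (leq_trans ii (leqnSn _)).
have q03 : 3 <= q0.
  have := prime_gt1 pq0; have : q0 != 2 by apply/eqP => e; move: oq0; rewrite e.
  lia.
have ndm' : ~~ (q0 %| m').
  apply/negP => /(prime_dvd_prodP _ _ _ _ pq0 hpp) [i ii e]; by have := hlt i s' ii (leqnn _); rewrite -/q0 -e ltnn.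
have m'0 : 0 < m' by rewrite lt0n; apply/negP => /eqP e; move: om'; rewrite e.
have qa : q0 <= q0 ^ a by rewrite -{1}(expn1 q0) leq_pexp2l //; lia.
have qa0 : 0 < q0 ^ a by rewrite expn_gt0; lia.
split.
  move=> [npos nex]; split.
    rewrite /composite; apply/andP; split; first by lia.
    apply/negP => pr; apply: nex; exists (2 * (m' * q0 ^ a) + r); split; first by lia.
    rewrite -(expn1 (2 * (m' * q0 ^ a) + r)) schemmel_pp //; last by lia.
    by rewrite expn0 mul1n addnK.
  move=> heq; apply: nex.
  have rq : r < q0 by lia.
  have heq' : q0 - r = 2 * m' by lia.
  exists (q0 ^ a.+1); split; first by rewrite expn_gt0; lia.
  rewrite schemmel_pp // heq'; lia.
move=> [comp hne]; split; first by lia.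
move=> [N [N0 hN]].
have omm : odd (m' * q0 ^ a) by rewrite oddM om' oddX oq0 orbT.
have [q [c [pq rq hq]]] := conv _ _ _ r0 oddr omm ltac:(nia) hN.
case: c hq => [|k] hq.
  move: comp => /andP [_]; have -> : 2 * (m' * q0 ^ a) + r = q by lia.
  by rewrite pq.
have qd : q %| 2 * (m' * q0 ^ a) by rewrite hq expnS -mulnA dvdn_mulr.
move: qd; rewrite Euclid_dvdM // => /orP [q2|].
  rewrite dvdn_prime2 // in q2; move/eqP: q2 => q2; subst q.
  have r1 : r = 1 by lia.
  by subst r; rewrite muln1 in hq; apply: (pow2_odd _ _ omm _ hq); nia.
rewrite Euclid_dvdM // => /orP [qm'|].
  have [i ii qi] := prime_dvd_prodP _ _ _ _ pq hpp qm'.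
  have lt := hlt i s' ii (leqnn _); rewrite -/q0 -qi in lt.
  have : q0 %| q ^ k.+1 * (q - r).
    rewrite -hq; apply: dvdn_mull; apply: dvdn_mull; by rewrite -(prednK a0) expnS dvdn_mulr.
  rewrite Euclid_dvdM // => /orP [|d].
    rewrite Euclid_dvdX // dvdn_prime2 // => /andP [/eqP e _]; lia.
  have : 0 < q - r by lia.
  by move/dvdn_leq/(_ d); lia.
rewrite Euclid_dvdX // dvdn_prime2 // => /andP [/eqP qq _]; subst q.
have L1 : logn q0 (2 * (m' * q0 ^ a)) = a.
  rewrite lognM ?muln_gt0 ?m'0 // lognM // pfactorK // logn0 ?logn0 //.
  by apply/negP => /dvdn_leq; lia.
have L2 : logn q0 (q0 ^ k.+1 * (q0 - r)) = k.+1.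
  rewrite lognM ?expn_gt0 ?subn_gt0 //; last by lia.
  rewrite pfactorK // logn0 ?addn0 //.
  by apply/negP => /dvdn_leq; lia.
have ak : a = k.+1 by rewrite -L1 hq L2.
rewrite -ak in hq.
have e : q0 ^ a * (2 * m') = q0 ^ a * (q0 - r) by rewrite -hq; nia.
move/eqP: e; rewrite eqn_pmul2l // => /eqP e.
by apply: hne; lia.
Qed.
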